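(* Let $c:[a,b]\times S^1\to\mathbb R^2$ be a smooth horizontal path of immersions ($\langle c_t,c_\theta\rangle\equiv0$), write $c_t=a\,ic_\theta/|c_\theta|$ and $s=|c_\theta|$, and suppose $c$ satisfies the $A=0$ geodesic equation $(|c_\theta|c_t)_t=-\tfrac12\big(|c_t|^2c_\theta/|c_\theta|\big)_\theta$. Then $s(t,\theta)a(t,\theta)^2$ is independent of $t$ for every $\theta$.
   Context: $S^1=\mathbb R/2\pi\mathbb Z$, $\mathbb R^2\cong\mathbb C$. Subscripts denote partial derivatives. *)

(* Defs.v *)
From Stdlib Require Import Reals List.
From Coquelicot Require Import Coquelicot.
Open Scope R_scope.

Definition pderiv (d : bool) (f : R -> R -> R) : R -> R -> R :=
  fun t th => if d then Derive (fun u => f u th) t else Derive (fun v => f t v) th.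

Definition d_t (f : R -> R -> R) := pderiv true f.
Definition d_th (f : R -> R -> R) := pderiv false f.

Fixpoint iter_pderiv (ds : list bool) (f : R -> R -> R) : R -> R -> R :=
  match ds with
  | nil => f
  | d :: ds' => pderiv d (iter_pderiv ds' f)
  end.

Definition smooth_on_strip (t0 t1 : R) (f : R -> R -> R) : Prop :=
  forall (ds : list bool) (t th : R), t0 < t < t1 ->
    ex_derive (fun u => iter_pderiv ds f u th) t /\
    ex_derive (fun v => iter_pderiv ds f t v) th /\
    continuous (fun p : R * R => iter_pderiv ds f (fst p) (snd p)) (t, th).

(* 2*pi-periodicity in theta, i.e. a map defined on (t0,t1) x S^1. *)
Definition periodic_th (f : R -> R -> R) : Prop :=
  forall t th, f t (th + 2 * PI) = f t th.

(* Main.v *)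
Require Import Defs.
From Stdlib Require Import Reals List.
From Coquelicot Require Import Coquelicot.
From Stdlib Require Import Lra Psatz.
Open Scope R_scope.

Lemma D1 (p q X : R -> R) u :
  ex_derive p u -> ex_derive q u -> ex_derive X u -> 0 < p u ^ 2 + q u ^ 2 ->
  Derive (fun u => sqrt (p u ^ 2 + q u ^ 2) * X u) u =
  (p u * Derive p u + q u * Derive q u) / sqrt (p u ^ 2 + q u ^ 2) * X u
  + sqrt (p u ^ 2 + q u ^ 2) * Derive X u.
Proof.
  intros Hp Hq HX Hs.
  apply is_derive_unique. auto_derive.
  - repeat split; auto.
  - change (fun x => p x) with p; change (fun x => q x) with q; change (fun x => X x) with X.
    replace (p u * (p u * 1) + q u * (q u * 1)) with (p u ^ 2 + q u ^ 2) by ring.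
    assert (0 < sqrt (p u ^ 2 + q u ^ 2)) by (apply sqrt_lt_R0; lra).
    field. lra.
Qed.

Lemma D2 (p q X Y : R -> R) u :
  ex_derive p u -> ex_derive q u -> ex_derive X u -> ex_derive Y u -> 0 < p u ^ 2 + q u ^ 2 ->
  Derive (fun u => (X u ^ 2 + Y u ^ 2) * p u / sqrt (p u ^ 2 + q u ^ 2)) u =
  ((2 * X u * Derive X u + 2 * Y u * Derive Y u) * p u + (X u ^ 2 + Y u ^ 2) * Derive p u)
     / sqrt (p u ^ 2 + q u ^ 2)
  - (X u ^ 2 + Y u ^ 2) * p u * ((p u * Derive p u + q u * Derive q u) / sqrt (p u ^ 2 + q u ^ 2))
     / (p u ^ 2 + q u ^ 2).
Proof.
  intros Hp Hq HX HY Hs.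
  assert (0 < sqrt (p u ^ 2 + q u ^ 2)) by (apply sqrt_lt_R0; lra).
  apply is_derive_unique. auto_derive.
  - repeat split; auto.
    replace (p u * (p u * 1) + q u * (q u * 1)) with (p u ^ 2 + q u ^ 2) by ring. lra.
  - change (fun x => p x) with p; change (fun x => q x) with q; change (fun x => X x) with X;
    change (fun x => Y x) with Y.
    replace (p u * (p u * 1) + q u * (q u * 1)) with (p u ^ 2 + q u ^ 2) by ring.
    field_simplify_eq; [rewrite pow2_sqrt by lra; ring|split; lra].
Qed.

Lemma D2b (p q X Y : R -> R) u :
  ex_derive p u -> ex_derive q u -> ex_derive X u -> ex_derive Y u -> 0 < p u ^ 2 + q u ^ 2 ->
  Derive (fun u => (X u ^ 2 + Y u ^ 2) * q u / sqrt (p u ^ 2 + q u ^ 2)) u =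
  ((2 * X u * Derive X u + 2 * Y u * Derive Y u) * q u + (X u ^ 2 + Y u ^ 2) * Derive q u)
     / sqrt (p u ^ 2 + q u ^ 2)
  - (X u ^ 2 + Y u ^ 2) * q u * ((p u * Derive p u + q u * Derive q u) / sqrt (p u ^ 2 + q u ^ 2))
     / (p u ^ 2 + q u ^ 2).
Proof.
  intros Hp Hq HX HY Hs.
  assert (0 < sqrt (p u ^ 2 + q u ^ 2)) by (apply sqrt_lt_R0; lra).
  apply is_derive_unique. auto_derive.
  - repeat split; auto.
    replace (p u * (p u * 1) + q u * (q u * 1)) with (p u ^ 2 + q u ^ 2) by ring. lra.
  - change (fun x => p x) with p; change (fun x => q x) with q; change (fun x => X x) with X;
    change (fun x => Y x) with Y.
    replace (p u * (p u * 1) + q u * (q u * 1)) with (p u ^ 2 + q u ^ 2) by ring.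
    field_simplify_eq; [rewrite pow2_sqrt by lra; ring|split; lra].
Qed.

Lemma D3 (p q X Y : R -> R) u :
  ex_derive p u -> ex_derive q u -> ex_derive X u -> ex_derive Y u -> 0 < p u ^ 2 + q u ^ 2 ->
  Derive (fun u => (p u * Y u - q u * X u) ^ 2 / sqrt (p u ^ 2 + q u ^ 2)) u =
  2 * (p u * Y u - q u * X u) * (Derive p u * Y u + p u * Derive Y u - Derive q u * X u - q u * Derive X u)
     / sqrt (p u ^ 2 + q u ^ 2)
  - (p u * Y u - q u * X u) ^ 2 * ((p u * Derive p u + q u * Derive q u) / sqrt (p u ^ 2 + q u ^ 2))
     / (p u ^ 2 + q u ^ 2).
Proof.
  intros Hp Hq HX HY Hs.
  assert (0 < sqrt (p u ^ 2 + q u ^ 2)) by (apply sqrt_lt_R0; lra).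
  apply is_derive_unique. auto_derive.
  - repeat split; auto.
    replace (p u * (p u * 1) + q u * (q u * 1)) with (p u ^ 2 + q u ^ 2) by ring. lra.
  - change (fun x => p x) with p; change (fun x => q x) with q; change (fun x => X x) with X;
    change (fun x => Y x) with Y.
    replace (p u * (p u * 1) + q u * (q u * 1)) with (p u ^ 2 + q u ^ 2) by ring.
    field_simplify_eq; [rewrite pow2_sqrt by lra; ring|split; lra].
Qed.
Lemma alg (p q a s pt qt Xt Yt pth qth : R) :
  0 < s -> s * s = p ^ 2 + q ^ 2 ->
  pt * p + (a * - q / s) * pth + qt * q + (a * p / s) * qth = 0 ->
  (p * pt + q * qt) / s * (a * - q / s) + s * Xt =
    - / 2 * (((2 * (a * - q / s) * pt + 2 * (a * p / s) * qt) * p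
               + ((a * - q / s) ^ 2 + (a * p / s) ^ 2) * pth) / s
             - ((a * - q / s) ^ 2 + (a * p / s) ^ 2) * p * ((p * pth + q * qth) / s) / (p ^ 2 + q ^ 2)) ->
  (p * pt + q * qt) / s * (a * p / s) + s * Yt =
    - / 2 * (((2 * (a * - q / s) * pt + 2 * (a * p / s) * qt) * q
               + ((a * - q / s) ^ 2 + (a * p / s) ^ 2) * qth) / s
             - ((a * - q / s) ^ 2 + (a * p / s) ^ 2) * q * ((p * pth + q * qth) / s) / (p ^ 2 + q ^ 2)) ->
  2 * (p * (a * p / s) - q * (a * - q / s)) *
     (pt * (a * p / s) + p * Yt - qt * (a * - q / s) - q * Xt) / s
  - (p * (a * p / s) - q * (a * - q / s)) ^ 2 * ((p * pt + q * qt) / s) / (p ^ 2 + q ^ 2) = 0.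
Proof.
  intros Hs Hs2 Hh E1 E2.
  rewrite <- Hs2 in E1, E2 |- *.
  assert (Hs0 : s <> 0) by lra.
  assert (Hpq : p ^ 2 + q ^ 2 <> 0) by (rewrite <- Hs2; nra).
  assert (E0 : (a * - q / s) ^ 2 + (a * p / s) ^ 2 = a ^ 2).
  { replace ((a * - q / s) ^ 2 + (a * p / s) ^ 2) with (a ^ 2 * (p ^ 2 + q ^ 2) / (s * s))
      by (field; auto).
    rewrite <- Hs2. field; auto. }
  rewrite E0 in E1, E2. rewrite Hs2 in E1, E2.
  set (T := p * pt + q * qt). set (W := p * qth - q * pth). set (K := p * Yt - q * Xt).
  assert (F1 : s * T + a * W = 0).
  { unfold T, W. replace (s * (p * pt + q * qt) + a * (p * qth - q * pth)) with
      ((pt * p + (a * - q / s) * pth + qt * q + (a * p / s) * qth) * s) by (field; auto).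
    rewrite Hh; ring. }
  assert (F2 : T * a + s * K = - (a ^ 2 * W) / (2 * s)).
  { replace (T * a) with (T * a * (p ^ 2 + q ^ 2) / (s * s)) by (rewrite <- Hs2; field; auto).
    transitivity (p * ((p * pt + q * qt) / s * (a * p / s) + s * Yt)
                  - q * ((p * pt + q * qt) / s * (a * - q / s) + s * Xt)).
    { unfold T, K. field. auto. }
    rewrite E1, E2. unfold W. field. auto. }
  assert (HK : K = - (a * T) / (2 * s)).
  { apply Rmult_eq_reg_l with (2 * s * s); [|nra].
    replace (2 * s * s * K) with (2 * s * (T * a + s * K) - 2 * s * T * a) by ring.
    rewrite F2.
    replace (a ^ 2 * W) with (a * (a * W)) by ring.
    replace (a * W) with (- (s * T)) by lra. field. auto. }
  replace (p * (a * p / s) - q * (a * - q / s)) with (a * s).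
  2:{ replace (p * (a * p / s) - q * (a * - q / s)) with (a * (p ^ 2 + q ^ 2) / s) by (field; auto).
      rewrite <- Hs2. field. auto. }
  replace (pt * (a * p / s) + p * Yt - qt * (a * - q / s) - q * Xt) with (a * T / s + K)
    by (unfold T, K; field; auto).
  rewrite HK. field. auto.
Qed.


Lemma D1' (f g h : R -> R -> R) t th :
  ex_derive (fun u => f u th) t -> ex_derive (fun u => g u th) t -> ex_derive (fun u => h u th) t ->
  0 < f t th ^ 2 + g t th ^ 2 ->
  d_t (fun u v => sqrt (f u v ^ 2 + g u v ^ 2) * h u v) t th =
  (f t th * d_t f t th + g t th * d_t g t th) / sqrt (f t th ^ 2 + g t th ^ 2) * h t th
  + sqrt (f t th ^ 2 + g t th ^ 2) * d_t h t th.
Proof. intros. exact (D1 (fun u => f u th) (fun u => g u th) (fun u => h u th) t H H0 H1 H2). Qed.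

Lemma D2' (f g h k : R -> R -> R) t th :
  ex_derive (fun v => f t v) th -> ex_derive (fun v => g t v) th ->
  ex_derive (fun v => h t v) th -> ex_derive (fun v => k t v) th ->
  0 < f t th ^ 2 + g t th ^ 2 ->
  d_th (fun u v => (h u v ^ 2 + k u v ^ 2) * f u v / sqrt (f u v ^ 2 + g u v ^ 2)) t th =
  ((2 * h t th * d_th h t th + 2 * k t th * d_th k t th) * f t th + (h t th ^ 2 + k t th ^ 2) * d_th f t th)
     / sqrt (f t th ^ 2 + g t th ^ 2)
  - (h t th ^ 2 + k t th ^ 2) * f t th * ((f t th * d_th f t th + g t th * d_th g t th) / sqrt (f t th ^ 2 + g t th ^ 2))
     / (f t th ^ 2 + g t th ^ 2).
Proof. intros. exact (D2 (fun v => f t v) (fun v => g t v) (fun v => h t v) (fun v => k t v) th H H0 H1 H2 H3). Qed.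

Lemma D2b' (f g h k : R -> R -> R) t th :
  ex_derive (fun v => f t v) th -> ex_derive (fun v => g t v) th ->
  ex_derive (fun v => h t v) th -> ex_derive (fun v => k t v) th ->
  0 < f t th ^ 2 + g t th ^ 2 ->
  d_th (fun u v => (h u v ^ 2 + k u v ^ 2) * g u v / sqrt (f u v ^ 2 + g u v ^ 2)) t th =
  ((2 * h t th * d_th h t th + 2 * k t th * d_th k t th) * g t th + (h t th ^ 2 + k t th ^ 2) * d_th g t th)
     / sqrt (f t th ^ 2 + g t th ^ 2)
  - (h t th ^ 2 + k t th ^ 2) * g t th * ((f t th * d_th f t th + g t th * d_th g t th) / sqrt (f t th ^ 2 + g t th ^ 2))
     / (f t th ^ 2 + g t th ^ 2).
Proof. intros. exact (D2b (fun v => f t v) (fun v => g t v) (fun v => h t v) (fun v => k t v) th H H0 H1 H2 H3). Qed.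

Lemma D3' (f g h k : R -> R -> R) t th :
  ex_derive (fun u => f u th) t -> ex_derive (fun u => g u th) t ->
  ex_derive (fun u => h u th) t -> ex_derive (fun u => k u th) t ->
  0 < f t th ^ 2 + g t th ^ 2 ->
  Derive (fun u => (f u th * k u th - g u th * h u th) ^ 2 / sqrt (f u th ^ 2 + g u th ^ 2)) t =
  2 * (f t th * k t th - g t th * h t th) *
    (d_t f t th * k t th + f t th * d_t k t th - d_t g t th * h t th - g t th * d_t h t th)
     / sqrt (f t th ^ 2 + g t th ^ 2)
  - (f t th * k t th - g t th * h t th) ^ 2 * ((f t th * d_t f t th + g t th * d_t g t th) / sqrt (f t th ^ 2 + g t th ^ 2))
     / (f t th ^ 2 + g t th ^ 2).
Proof. intros. exact (D3 (fun u => f u th) (fun u => g u th) (fun u => h u th) (fun u => k u th) t H H0 H1 H2 H3). Qed.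

Lemma D4 (f g h k : R -> R -> R) t th :
  ex_derive (fun v => f t v) th -> ex_derive (fun v => g t v) th ->
  ex_derive (fun v => h t v) th -> ex_derive (fun v => k t v) th ->
  Derive (fun v => h t v * f t v + k t v * g t v) th =
  d_th h t th * f t th + h t th * d_th f t th + d_th k t th * g t th + k t th * d_th g t th.
Proof.
  intros. apply is_derive_unique. auto_derive.
  - repeat split; auto.
  - unfold d_th, pderiv. ring.
Qed.

Lemma schwarz_strip t0 t1 f t th : t0 < t < t1 -> smooth_on_strip t0 t1 f ->
  d_th (d_t f) t th = d_t (d_th f) t th.
Proof.
  intros Ht Hf.
  assert (Hd : 0 < Rmin (t - t0) (t1 - t)) by (apply Rmin_pos; lra).
  symmetry.
  change (Derive (fun z => Derive (fun w => f z w) th) t =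
          Derive (fun z => Derive (fun w => f w z) t) th).
  apply Schwarz.
  - exists (mkposreal _ Hd). intros u v Hu Hv. simpl in Hu.
    assert (Hu' : t0 < u < t1).
    { apply Rabs_def2 in Hu. destruct Hu.
      pose proof (Rmin_l (t - t0) (t1 - t)). pose proof (Rmin_r (t - t0) (t1 - t)). lra. }
    split; [exact (proj1 (Hf nil u v Hu'))|].
    split; [exact (proj1 (proj2 (Hf nil u v Hu')))|].
    split; [exact (proj1 (Hf (false :: nil) u v Hu'))|].
    exact (proj1 (proj2 (Hf (true :: nil) u v Hu'))).
  - apply continuity_2d_pt_filterlim.
    exact (proj2 (proj2 (Hf (true :: false :: nil) t th Ht))).
  - apply continuity_2d_pt_filterlim.
    exact (proj2 (proj2 (Hf (false :: true :: nil) t th Ht))).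
Qed.

Lemma const_strip t0 t1 (G : R -> R) :
  (forall u, t0 < u < t1 -> ex_derive G u /\ Derive G u = 0) ->
  forall t t', t0 < t < t1 -> t0 < t' < t1 -> G t = G t'.
Proof.
  intros HG t t' Ht Ht'.
  assert (Hin : forall z, Rmin t t' <= z <= Rmax t t' -> t0 < z < t1).
  { intros z Hz. unfold Rmin, Rmax in Hz. destruct (Rle_dec t t'); lra. }
  destruct (MVT_gen G t t' (fun _ => 0)) as [c [Hc E]].
  - intros z Hz. destruct (HG z (Hin z (conj (Rlt_le _ _ (proj1 Hz)) (Rlt_le _ _ (proj2 Hz))))) as [H1 H2].
    rewrite <- H2. apply Derive_correct. exact H1.
  - intros z Hz. apply continuity_pt_filterlim. apply (@ex_derive_continuous R_AbsRing R_NormedModule G z).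
    exact (proj1 (HG z (Hin z Hz))).
  - lra.
Qed.
Theorem mainTheorem17 (t0 t1 : R) (x y a : R -> R -> R) :
  t0 < t1 ->
  smooth_on_strip t0 t1 x -> smooth_on_strip t0 t1 y ->
  periodic_th x -> periodic_th y ->
  (* immersion *)
  (forall t th, t0 < t < t1 -> (d_th x t th, d_th y t th) <> (0, 0)) ->
  (* horizontal *)
  (forall t th, t0 < t < t1 ->
     d_t x t th * d_th x t th + d_t y t th * d_th y t th = 0) ->
  (* definition of a:  c_t = a i c_theta / |c_theta| *)
  (forall t th, t0 < t < t1 ->
     d_t x t th = a t th * (- d_th y t th) / sqrt (d_th x t th ^ 2 + d_th y t th ^ 2) /\
     d_t y t th = a t th * d_th x t th / sqrt (d_th x t th ^ 2 + d_th y t th ^ 2)) ->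
  (* A = 0 geodesic equation, componentwise *)
  (forall t th, t0 < t < t1 ->
     d_t (fun u v => sqrt (d_th x u v ^ 2 + d_th y u v ^ 2) * d_t x u v) t th =
     - / 2 * d_th (fun u v => (d_t x u v ^ 2 + d_t y u v ^ 2) * d_th x u v
                              / sqrt (d_th x u v ^ 2 + d_th y u v ^ 2)) t th /\
     d_t (fun u v => sqrt (d_th x u v ^ 2 + d_th y u v ^ 2) * d_t y u v) t th =
     - / 2 * d_th (fun u v => (d_t x u v ^ 2 + d_t y u v ^ 2) * d_th y u v
                              / sqrt (d_th x u v ^ 2 + d_th y u v ^ 2)) t th) ->
  (* conclusion: s a^2 independent of t *)
  forall th t t', t0 < t < t1 -> t0 < t' < t1 ->
    sqrt (d_th x t th ^ 2 + d_th y t th ^ 2) * a t th ^ 2 =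
    sqrt (d_th x t' th ^ 2 + d_th y t' th ^ 2) * a t' th ^ 2.

Proof.
  intros Hlt Hx Hy Hpx Hpy Himm Hhor Ha Hgeo th.
  assert (Hpos : forall u, t0 < u < t1 -> 0 < d_th x u th ^ 2 + d_th y u th ^ 2).
  { intros u Hu. specialize (Himm u th Hu).
    destruct (Req_dec (d_th x u th) 0) as [E|E].
    - assert (d_th y u th <> 0) by (intro E'; apply Himm; rewrite E, E'; reflexivity).
      rewrite E. pose proof (pow2_gt_0 _ H) as G. simpl in *. nra.
    - pose proof (pow2_gt_0 _ E). pose proof (pow2_ge_0 (d_th y u th)). lra. }
  set (G := fun u => (d_th x u th * d_t y u th - d_th y u th * d_t x u th) ^ 2
                     / sqrt (d_th x u th ^ 2 + d_th y u th ^ 2)).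
  assert (HGv : forall u, t0 < u < t1 ->
     sqrt (d_th x u th ^ 2 + d_th y u th ^ 2) * a u th ^ 2 = G u).
  { intros u Hu. unfold G. destruct (Ha u th Hu) as [HX HY]. rewrite HX, HY.
    pose proof (Hpos u Hu) as Hp.
    assert (HS : 0 < sqrt (d_th x u th ^ 2 + d_th y u th ^ 2)) by (apply sqrt_lt_R0; lra).
    pose proof (sqrt_sqrt (d_th x u th ^ 2 + d_th y u th ^ 2) (Rlt_le _ _ Hp)) as HSS.
    set (S := sqrt (d_th x u th ^ 2 + d_th y u th ^ 2)) in *.
    replace (d_th x u th * (a u th * d_th x u th / S) - d_th y u th * (a u th * - d_th y u th / S))
      with (a u th * (d_th x u th ^ 2 + d_th y u th ^ 2) / S) by (field; lra).
    rewrite <- HSS. field. lra. }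
  intros t t' Ht Ht'.
  rewrite (HGv t Ht), (HGv t' Ht').
  apply (const_strip t0 t1); auto.
  intros u Hu.
  assert (ePt : ex_derive (fun v => d_th x v th) u) by exact (proj1 (Hx (false :: nil) u th Hu)).
  assert (eQt : ex_derive (fun v => d_th y v th) u) by exact (proj1 (Hy (false :: nil) u th Hu)).
  assert (eXt : ex_derive (fun v => d_t x v th) u) by exact (proj1 (Hx (true :: nil) u th Hu)).
  assert (eYt : ex_derive (fun v => d_t y v th) u) by exact (proj1 (Hy (true :: nil) u th Hu)).
  assert (ePh : ex_derive (fun v => d_th x u v) th) by exact (proj1 (proj2 (Hx (false :: nil) u th Hu))).
  assert (eQh : ex_derive (fun v => d_th y u v) th) by exact (proj1 (proj2 (Hy (false :: nil) u th Hu))).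
  assert (eXh : ex_derive (fun v => d_t x u v) th) by exact (proj1 (proj2 (Hx (true :: nil) u th Hu))).
  assert (eYh : ex_derive (fun v => d_t y u v) th) by exact (proj1 (proj2 (Hy (true :: nil) u th Hu))).
  assert (Hpu : forall v, 0 < d_th x u v ^ 2 + d_th y u v ^ 2).
  { intro v. specialize (Himm u v Hu).
    destruct (Req_dec (d_th x u v) 0) as [E|E].
    - assert (d_th y u v <> 0) by (intro E'; apply Himm; rewrite E, E'; reflexivity).
      rewrite E. pose proof (pow2_gt_0 _ H) as G'. simpl in *. nra.
    - pose proof (pow2_gt_0 _ E). pose proof (pow2_ge_0 (d_th y u v)). lra. }
  split.
  { unfold G. pose proof (Hpos u Hu). auto_derive. repeat split; auto. all: try (apply Rgt_not_eq; apply sqrt_lt_R0); nra. }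
  destruct (Hgeo u th Hu) as [G1 G2].
  rewrite (D1' (d_th x) (d_th y) (d_t x)) in G1 by auto.
  rewrite (D1' (d_th x) (d_th y) (d_t y)) in G2 by auto.
  rewrite (D2' (d_th x) (d_th y) (d_t x) (d_t y)) in G1 by auto.
  rewrite (D2b' (d_th x) (d_th y) (d_t x) (d_t y)) in G2 by auto.
  unfold G. rewrite (D3' (d_th x) (d_th y) (d_t x) (d_t y)) by auto.
  assert (Hh : Derive (fun v => d_t x u v * d_th x u v + d_t y u v * d_th y u v) th = 0).
  { rewrite (Derive_ext _ (fun _ => 0)). apply Derive_const. intro v. apply Hhor. exact Hu. }
  rewrite (D4 (d_th x) (d_th y) (d_t x) (d_t y)) in Hh by auto.
  rewrite (schwarz_strip t0 t1 x u th Hu Hx), (schwarz_strip t0 t1 y u th Hu Hy) in G1, G2, Hh.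
  destruct (Ha u th Hu) as [HX HY].
  rewrite HX, HY in G1, G2, Hh |- *.
  pose proof (Hpos u Hu) as Hp.
  pose proof (sqrt_lt_R0 _ Hp) as HS.
  pose proof (sqrt_sqrt _ (Rlt_le _ _ Hp)) as HSS.
  set (S := sqrt (d_th x u th ^ 2 + d_th y u th ^ 2)) in *.
  exact (alg _ _ _ _ _ _ _ _ _ _ HS HSS Hh G1 G2).
Qed.
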